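(* The probabilistic function $\mathit{I2P}:\mathbb{N}\to\mathcal D(\mathbb{N})$ defined below belongs to $\mathscr{PR}$.
   Context: Fix a computable bijection $\mathit{pair}:\mathbb{N}\times\mathbb{N}\to\mathbb{N}$ with computable inverse; a natural $n=\mathit{pair}(a,b)$ with $b>0$ represents the rational $a/b$. $\mathit{I2P}(n)(1)=q$ and $\mathit{I2P}(n)(0)=1-q$ if $n$ represents a rational $q$ with $0\le q\le 1$, and $\mathit{I2P}(n)(y)=0$ in all other cases. $\mathcal D(X)$ is the set of $\mathcal D:X\to[0,1]$ with $\sum_x\mathcal D(x)\le1$; a PF is a function $\mathbb{N}^k\to\mathcal D(\mathbb{N})$. Basic PFs: $z(n)(0)=1$; $s(n)(n+1)=1$; $\Pi^n_m(k_1,\dots,k_n)(k_m)=1$; $r(x)(x)=r(x)(x+1)=1/2$ (other values $0$). Generalized composition $(f\odot(g_1,\dots,g_n))(\vec x)(y)=\sum_{z_1,\dots,z_n} f(z_1,\dots,z_n)(y)\prod_i g_i(\vec x)(z_i)$; primitive recursion $h=\mathrm{rec}(f,g)$: $h(\vec x,0)=f(\vec x)$, $h(\vec x,y+1)(w)=\sum_z h(\vec x,y)(z)\, g(\vec x,y,z)(w)$; minimization $\mu f(\vec x)(y)=f(\vec x,y)(0)\prod_{z<y}\sum_{k>0}f(\vec x,z)(k)$. $\mathscr{PR}$ is the smallest class of PFs containing the basic PFs and closed under these three operations. *)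

(* Defs.v *)
From Stdlib Require Import Reals Arith ClassicalEpsilon.
From Stdlib Require Vector Fin.
Open Scope R_scope.

(* ssum a = the sum of the series sum_{n>=0} a n (chosen by epsilon among
   the limits of the partial sums; all series occurring below are series of
   nonnegative terms bounded by 1, hence convergent). *)
Definition ssum (a : nat -> R) : R :=
  epsilon (inhabits 0%R) (fun l => infinite_sum a l).

Fixpoint sumvec (n : nat) : (Vector.t nat n -> R) -> R :=
  match n with
  | O => fun F => F (Vector.nil nat)
  | S m => fun F => ssum (fun z => sumvec m (fun zs => F (Vector.cons nat z m zs)))
  end.

Fixpoint prodfin (n : nat) : (Fin.t n -> R) -> R :=
  match n with
  | O => fun _ => 1
  | S m => fun a => a Fin.F1 * prodfin m (fun i => a (Fin.FS i))
  end.

Fixpoint prodlt (y : nat) (a : nat -> R) : R :=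
  match y with
  | O => 1
  | S y' => prodlt y' a * a y'
  end.

(* A k-ary PF maps nat^k to a function D : nat -> R (intended D(nat)). *)
Definition PF (k : nat) := Vector.t nat k -> nat -> R.

Definition onearg (v : Vector.t nat 1) : nat := Vector.hd v.

Definition zero_pf : PF 1 := fun _ y => if Nat.eqb y 0 then 1 else 0.
Definition succ_pf : PF 1 := fun v y => if Nat.eqb y (S (onearg v)) then 1 else 0.
Definition proj_pf (n : nat) (m : Fin.t n) : PF n :=
  fun v y => if Nat.eqb y (Vector.nth v m) then 1 else 0.
Definition rand_pf : PF 1 :=
  fun v y => if Nat.eqb y (onearg v) then 1/2
             else if Nat.eqb y (S (onearg v)) then 1/2 else 0.

Definition comp_pf (n k : nat) (f : PF n) (gs : Fin.t n -> PF k) : PF k :=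
  fun x y => sumvec n (fun z => f z y * prodfin n (fun i => gs i x (Vector.nth z i))).

(* primitive recursion h = rec(f,g), with h(x,y) = h (append x [y]) *)
Fixpoint rec_aux (k : nat) (f : PF k) (g : PF (k + 2)) (x : Vector.t nat k)
    (y : nat) : nat -> R :=
  match y with
  | O => f x
  | S y' => fun w => ssum (fun z =>
       rec_aux k f g x y' z * g (Vector.append x (Vector.cons nat y' 1 (Vector.cons nat z 0 (Vector.nil nat)))) w)
  end.

Definition rec_pf (k : nat) (f : PF k) (g : PF (k + 2)) : PF (k + 1) :=
  fun v => let p := Vector.splitat k v in rec_aux k f g (fst p) (Vector.hd (snd p)).

Definition snoc1 (k : nat) (x : Vector.t nat k) (y : nat) : Vector.t nat (k + 1) :=
  Vector.append x (Vector.cons nat y 0 (Vector.nil nat)).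

Definition mu_pf (k : nat) (f : PF (k + 1)) : PF k :=
  fun x y => f (snoc1 k x y) 0%nat *
             prodlt y (fun z => ssum (fun j => f (snoc1 k x z) (S j))).

Inductive PR : forall k : nat, PF k -> Prop :=
| PR_zero : PR 1 zero_pf
| PR_succ : PR 1 succ_pf
| PR_proj : forall (n : nat) (m : Fin.t n), PR n (proj_pf n m)
| PR_rand : PR 1 rand_pf
| PR_comp : forall (n k : nat) (f : PF n) (gs : Fin.t n -> PF k),
    PR n f -> (forall i, PR k (gs i)) -> PR k (comp_pf n k f gs)
| PR_rec : forall (k : nat) (f : PF k) (g : PF (k + 2)),
    PR k f -> PR (k + 2) g -> PR (k + 1) (rec_pf k f g)
| PR_mu : forall (k : nat) (f : PF (k + 1)), PR (k + 1) f -> PR k (mu_pf k f).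

Definition pair (a b : nat) : nat := ((a + b) * (a + b + 1)) / 2 + b.

(* its inverse: enumerate N x N along diagonals *)
Definition pair_succ (p : nat * nat) : nat * nat :=
  match p with
  | (O, b) => (S b, O)
  | (S a, b) => (a, S b)
  end.
Definition unpair (n : nat) : nat * nat := Nat.iter n pair_succ (0%nat, 0%nat).

Definition I2P : PF 1 :=
  fun v y =>
    let (a, b) := unpair (onearg v) in
    if Nat.ltb 0 b then
      let q := INR a / INR b in
      if Rle_dec 0 q then
        if Rle_dec q 1 then
          (if Nat.eqb y 1 then q else if Nat.eqb y 0 then 1 - q else 0)
        else 0
      else 0
    else 0.

(* Main.v *)
Require Import Defs.
From Stdlib Require Import Reals Lra Lia ClassicalEpsilon FunctionalExtensionality.
From Stdlib Require Vector Fin.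
Open Scope R_scope.

Lemma ssum_spec a l : infinite_sum a l -> ssum a = l.
Proof.
  intro H. unfold ssum. apply (uniqueness_sum a).
  - apply epsilon_spec. exists l; exact H.
  - exact H.
Qed.

Lemma sum_point (a : nat -> R) k :
  (forall j, j <> k -> a j = 0) -> forall n, sum_f_R0 a n = if Nat.leb k n then a k else 0.
Proof.
  intros H n. induction n as [|n IH]; simpl.
  - destruct k; simpl. reflexivity. apply H; lia.
  - rewrite IH. destruct (Nat.leb k n) eqn:E1; destruct (Nat.leb k (S n)) eqn:E2;
    apply Nat.leb_le in E1 || apply Nat.leb_gt in E1;
    apply Nat.leb_le in E2 || apply Nat.leb_gt in E2; try lia.
    + rewrite (H (S n)) by lia. ring.
    + assert (k = S n) by lia. subst. ring.
    + rewrite (H (S n)) by lia. ring.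
Qed.

Lemma ssum_point (a : nat -> R) k : (forall j, j <> k -> a j = 0) -> ssum a = a k.
Proof.
  intro H. apply ssum_spec. intros eps He. exists k. intros n Hn.
  rewrite (sum_point a k H n). replace (Nat.leb k n) with true.
  unfold R_dist. rewrite Rminus_diag, Rabs_R0. exact He.
  symmetry; apply Nat.leb_le; lia.
Qed.

Lemma ssum_zero : ssum (fun _ => 0) = 0.
Proof. rewrite (ssum_point _ 0); auto. Qed.

Lemma ssum_zero' a : (forall j, a j = 0) -> ssum a = 0.
Proof. intro H. rewrite (ssum_point _ 0); auto. Qed.

Lemma sumvec_zero n F : (forall z, F z = 0) -> sumvec n F = 0.
Proof.
  revert F; induction n; intros F H; simpl. apply H.
  apply ssum_zero'. intro j. apply IHn. intro; apply H.
Qed.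

Definition ind (b : bool) : R := if b then 1 else 0.

Lemma sumvec_point n (w : Vector.t nat n) (F : Vector.t nat n -> R) :
  sumvec n (fun z => F z * prodfin n (fun i => if Nat.eqb (Vector.nth z i) (Vector.nth w i) then 1 else 0)) = F w.
Proof.
  induction w as [|h m t IH] in F |- *; simpl.
  - ring.
  - rewrite (ssum_point _ h).
    + rewrite Nat.eqb_refl.
      rewrite <- (IH (fun zs => F (Vector.cons nat h m zs))).
      f_equal. apply functional_extensionality. intro zs. ring.
    + intros j Hj. apply sumvec_zero. intro z. simpl.
      replace (Nat.eqb j h) with false. ring. symmetry; apply Nat.eqb_neq; auto.
Qed.

Definition det (k : nat) (h : Vector.t nat k -> nat) : PF k :=
  fun v y => if Nat.eqb y (h v) then 1 else 0.

Lemma comp_det n k f (gl : Vector.t (Vector.t nat k -> nat) n) x y :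
  comp_pf n k f (fun i => det k (Vector.nth gl i)) x y = f (Vector.map (fun g => g x) gl) y.
Proof.
  unfold comp_pf, det.
  rewrite <- (sumvec_point n (Vector.map (fun g => g x) gl) (fun z => f z y)).
  f_equal. apply functional_extensionality. intro z. f_equal. f_equal.
  apply functional_extensionality. intro i. rewrite (Vector.nth_map _ _ i i eq_refl). reflexivity.
Qed.

Fixpoint primrec (k : nat) (f : Vector.t nat k -> nat) (g : Vector.t nat (k+2) -> nat)
  (x : Vector.t nat k) (y : nat) : nat :=
  match y with
  | O => f x
  | S y' => g (Vector.append x (Vector.cons nat y' 1 (Vector.cons nat (primrec k f g x y') 0 (Vector.nil nat))))
  end.

Lemma rec_det k f g x y w :
  rec_aux k (det k f) (det (k+2) g) x y w = if Nat.eqb w (primrec k f g x y) then 1 else 0.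
Proof.
  induction y in w |- *; simpl. reflexivity.
  rewrite (ssum_point _ (primrec k f g x y)).
  - rewrite IHy, Nat.eqb_refl. unfold det. ring.
  - intros j Hj. rewrite IHy. replace (Nat.eqb j _) with false. ring.
    symmetry; apply Nat.eqb_neq; auto.
Qed.

Lemma prodlt_ones y a : (forall z, (z < y)%nat -> a z = 1) -> prodlt y a = 1.
Proof.
  induction y; intro H; simpl. reflexivity.
  rewrite IHy, H. ring. lia. intros; apply H; lia.
Qed.

Lemma mu_det k f x y :
  mu_pf k (det (k+1) f) x y =
  (if Nat.eqb (f (snoc1 k x y)) 0 then 1 else 0) *
  prodlt y (fun z => if Nat.eqb (f (snoc1 k x z)) 0 then 0 else 1).
Proof.
  unfold mu_pf, det. f_equal.
  - destruct (f (snoc1 k x y)); reflexivity.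
  - f_equal. apply functional_extensionality. intro z.
    destruct (f (snoc1 k x z)) as [|c] eqn:E.
    + apply ssum_zero'. intro j. reflexivity.
    + rewrite (ssum_point _ c). simpl. rewrite Nat.eqb_refl. reflexivity.
      intros j Hj. simpl. replace (Nat.eqb j c) with false. reflexivity.
      symmetry; apply Nat.eqb_neq; auto.
Qed.

Lemma mu_det_point k f x d (c : bool) y :
  (forall z, f (snoc1 k x z) = if andb c (Nat.eqb z d) then 0%nat else 1%nat) ->
  mu_pf k (det (k+1) f) x y = if andb c (Nat.eqb y d) then 1 else 0.
Proof.
  intro H. rewrite mu_det, H.
  destruct c; simpl; [|ring].
  destruct (Nat.eqb y d) eqn:E; simpl; [|ring].
  apply Nat.eqb_eq in E; subst.
  rewrite prodlt_ones. ring. intros z Hz. rewrite H. simpl.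
  replace (Nat.eqb z d) with false. reflexivity. symmetry; apply Nat.eqb_neq; lia.
Qed.

Definition DPR k (h : Vector.t nat k -> nat) := PR k (det k h).

Lemma DPR_ext k f g : DPR k f -> (forall v, f v = g v) -> DPR k g.
Proof. intros H E. replace g with f; auto. apply functional_extensionality; auto. Qed.

Lemma DPR_proj n m : DPR n (fun v => Vector.nth v m).
Proof. exact (PR_proj n m). Qed.

Lemma DPR_succ : DPR 1 (fun v => S (Vector.hd v)).
Proof. exact PR_succ. Qed.

Lemma DPR_comp n k f (gl : Vector.t (Vector.t nat k -> nat) n) :
  DPR n f -> (forall i, DPR k (Vector.nth gl i)) ->
  DPR k (fun x => f (Vector.map (fun g => g x) gl)).
Proof.
  intros Hf Hg. unfold DPR.
  replace (det k _) with (comp_pf n k (det n f) (fun i => det k (Vector.nth gl i))).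
  - apply PR_comp; auto.
  - apply functional_extensionality; intro x; apply functional_extensionality; intro y.
    rewrite comp_det. reflexivity.
Qed.

Lemma DPR_rec k f g (H : Vector.t nat (k+1) -> nat) :
  DPR k f -> DPR (k+2) g ->
  (forall v, H v = primrec k f g (fst (Vector.splitat k v)) (Vector.hd (snd (Vector.splitat k v)))) ->
  DPR (k+1) H.
Proof.
  intros Hf Hg E. unfold DPR.
  replace (det (k+1) H) with (rec_pf k (det k f) (det (k+2) g)).
  - apply PR_rec; auto.
  - apply functional_extensionality; intro v; apply functional_extensionality; intro y.
    unfold rec_pf. simpl. rewrite rec_det. unfold det. rewrite E. reflexivity.
Qed.

Lemma DPR_c00 : DPR 0 (fun _ => 0%nat).
Proof.
  unfold DPR. replace (det 0 _) with (mu_pf 0 zero_pf). apply PR_mu. exact PR_zero.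
  apply functional_extensionality; intro v; apply functional_extensionality; intro y.
  change zero_pf with (det (0+1) (fun _ => 0%nat)). rewrite mu_det. simpl.
  unfold det. destruct y; simpl. ring.
  replace (prodlt y (fun _ => 0%R)) with (prodlt y (fun _ => 0%R)) by reflexivity. ring.
Qed.

Lemma nth_nil (P : (Vector.t nat 0 -> nat) -> Prop) (gl : Vector.t _ 0) :
  forall i, P (Vector.nth gl i).
Proof. intro i. apply (Fin.case0 (fun i => P (Vector.nth gl i))). Qed.

Lemma nth_cons (P : (Vector.t nat 0 -> nat) -> Prop) : True. Proof. exact I. Qed.

Lemma forall_nil {A} (P : A -> Prop) (i : Fin.t 0) (gl : Vector.t A 0) : P (Vector.nth gl i).
Proof. apply (Fin.case0 (fun i => P (Vector.nth gl i))). Qed.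

Lemma forall_cons {A} (P : A -> Prop) n g (t : Vector.t A n) :
  P g -> (forall i, P (Vector.nth t i)) -> forall i, P (Vector.nth (Vector.cons A g n t) i).
Proof.
  intros Hg Ht i. apply (Fin.caseS' i (fun i => P (Vector.nth (Vector.cons A g n t) i))).
  exact Hg. intro p. exact (Ht p).
Qed.

Lemma DPR_c0 k : DPR k (fun _ => 0%nat).
Proof.
  apply (DPR_comp 0 k (fun _ => 0%nat) (Vector.nil _)). exact DPR_c00.
  intro i. apply forall_nil.
Qed.

Lemma lift1 op k h : DPR 1 (fun v => op (Vector.hd v)) -> DPR k h -> DPR k (fun x => op (h x)).
Proof.
  intros Ho Hh. apply (DPR_comp 1 k _ (Vector.cons _ h 0 (Vector.nil _)) Ho).
  apply forall_cons. exact Hh. intro i; apply forall_nil.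
Qed.

Lemma lift2 op k h1 h2 : DPR 2 (fun v => op (Vector.hd v) (Vector.hd (Vector.tl v))) ->
  DPR k h1 -> DPR k h2 -> DPR k (fun x => op (h1 x) (h2 x)).
Proof.
  intros Ho H1 H2. apply (DPR_comp 2 k _ (Vector.cons _ h1 1 (Vector.cons _ h2 0 (Vector.nil _))) Ho).
  apply forall_cons. exact H1. apply forall_cons. exact H2. intro i; apply forall_nil.
Qed.

Lemma DPR_S k h : DPR k h -> DPR k (fun x => S (h x)).
Proof. intro H. apply (lift1 S). exact DPR_succ. exact H. Qed.

Lemma DPR_const k c : DPR k (fun _ => c).
Proof. induction c. apply DPR_c0. apply (DPR_S k (fun _ => c)). exact IHc. Qed.

Ltac vd v := simpl in v; match type of v with
 | Vector.t _ 0 => pattern v; apply Vector.case0; clear v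
 | Vector.t _ (S _) => let h := fresh "a" in let t := fresh "v" in
     pattern v; apply Vector.caseS'; clear v; intros h t; vd t
 | _ => idtac
 end.

Lemma DPR_p0 k : DPR (S k) (fun v => Vector.hd v).
Proof. apply (DPR_ext _ _ _ (DPR_proj (S k) Fin.F1)). intro v. vd v. reflexivity. Qed.
Lemma DPR_p1 k : DPR (S (S k)) (fun v => Vector.hd (Vector.tl v)).
Proof. apply (DPR_ext _ _ _ (DPR_proj _ (Fin.FS Fin.F1))). intro v. vd v. reflexivity. Qed.
Lemma DPR_p2 k : DPR (S (S (S k))) (fun v => Vector.hd (Vector.tl (Vector.tl v))).
Proof. apply (DPR_ext _ _ _ (DPR_proj _ (Fin.FS (Fin.FS Fin.F1)))). intro v. vd v. reflexivity. Qed.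

Lemma DPR_pred : DPR 1 (fun v => Nat.pred (Vector.hd v)).
Proof.
  apply (DPR_rec 0 (fun _ => 0%nat) (fun v : Vector.t nat 2 => Vector.hd v)).
  apply DPR_c00. apply DPR_p0.
  intro v. vd v. destruct a; reflexivity.
Qed.

Lemma DPR_plus : DPR 2 (fun v => Vector.hd v + Vector.hd (Vector.tl v))%nat.
Proof.
  apply (DPR_rec 1 (fun v => Vector.hd v) (fun v : Vector.t nat 3 => S (Vector.hd (Vector.tl (Vector.tl v))))).
  apply DPR_p0. apply DPR_S, DPR_p2.
  intro v. vd v. simpl. induction a0; simpl; lia.
Qed.

Lemma DPR_minus : DPR 2 (fun v => Vector.hd v - Vector.hd (Vector.tl v))%nat.
Proof.
  apply (DPR_rec 1 (fun v => Vector.hd v) (fun v : Vector.t nat 3 => Nat.pred (Vector.hd (Vector.tl (Vector.tl v))))).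
  apply DPR_p0. apply (lift1 Nat.pred). apply DPR_pred. apply DPR_p2.
  intro v. vd v. simpl. induction a0; simpl. lia. rewrite <- IHa0. lia.
Qed.

Lemma DPR_mult : DPR 2 (fun v => Vector.hd v * Vector.hd (Vector.tl v))%nat.
Proof.
  apply (DPR_rec 1 (fun _ => 0%nat) (fun v : Vector.t nat 3 => Vector.hd (Vector.tl (Vector.tl v)) + Vector.hd v)%nat).
  apply DPR_c0. apply (lift2 Nat.add). apply DPR_plus. apply DPR_p2. apply DPR_p0.
  intro v. vd v. simpl. induction a0; simpl. lia. rewrite <- IHa0. lia.
Qed.

Lemma DPR_add k h1 h2 : DPR k h1 -> DPR k h2 -> DPR k (fun x => h1 x + h2 x)%nat.
Proof. apply (lift2 Nat.add), DPR_plus. Qed.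
Lemma DPR_sub k h1 h2 : DPR k h1 -> DPR k h2 -> DPR k (fun x => h1 x - h2 x)%nat.
Proof. apply (lift2 Nat.sub), DPR_minus. Qed.
Lemma DPR_mul k h1 h2 : DPR k h1 -> DPR k h2 -> DPR k (fun x => h1 x * h2 x)%nat.
Proof. apply (lift2 Nat.mul), DPR_mult. Qed.

Open Scope nat_scope.
Fixpoint tri t := match t with 0 => 0 | S t' => tri t' + S t' end.
Fixpoint sq n := match n with 0 => 0
  | S n' => sq n' + (1 - ((S n' - tri (S (sq n'))) + (tri (S (sq n')) - S n'))) end.
Definition bb n := n - tri (sq n).
Definition aa n := sq n - bb n.
Fixpoint rr n Y := match Y with 0 => aa n
  | S i => 2 * rr n i - bb n * (1 - (bb n - 2 * rr n i)) end.
Definition dig n Y := 1 - (bb n - 2 * rr n Y).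
Definition valid n := (1 - (1 - bb n)) * (1 - (aa n - bb n)).
Definition hD (v : Vector.t nat 3) :=
  let n := Vector.hd v in let Y := Vector.hd (Vector.tl v) in let y := Vector.hd (Vector.tl (Vector.tl v)) in
  1 - valid n * (1 - ((y - dig n Y) + (dig n Y - y))).

Ltac dpr := repeat first [ apply DPR_add | apply DPR_sub | apply DPR_mul | apply DPR_S
   | apply DPR_p0 | apply DPR_p1 | apply DPR_p2 | apply DPR_const ].

Lemma DPR_tri : DPR 1 (fun v => tri (Vector.hd v)).
Proof.
  apply (DPR_rec 0 (fun _ => 0) (fun v : Vector.t nat 2 => Vector.hd (Vector.tl v) + S (Vector.hd v))).
  apply DPR_c00. dpr.
  intro v. vd v. simpl. induction a; simpl; auto.
Qed.
Lemma L_tri k h : DPR k h -> DPR k (fun x => tri (h x)).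
Proof. apply (lift1 tri), DPR_tri. Qed.

Lemma DPR_sq : DPR 1 (fun v => sq (Vector.hd v)).
Proof.
  apply (DPR_rec 0 (fun _ => 0) (fun v : Vector.t nat 2 => Vector.hd (Vector.tl v) +
     (1 - ((S (Vector.hd v) - tri (S (Vector.hd (Vector.tl v)))) + (tri (S (Vector.hd (Vector.tl v))) - S (Vector.hd v)))))).
  apply DPR_c00. dpr; apply L_tri; dpr.
  intro v. vd v. simpl. induction a; simpl; auto. rewrite <- IHa; reflexivity.
Qed.
Lemma L_sq k h : DPR k h -> DPR k (fun x => sq (h x)).
Proof. apply (lift1 sq), DPR_sq. Qed.

Lemma L_bb k h : DPR k h -> DPR k (fun x => bb (h x)).
Proof. intro H. unfold bb. dpr; first [exact H | apply L_tri, L_sq, H]. Qed.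
Lemma L_aa k h : DPR k h -> DPR k (fun x => aa (h x)).
Proof. intro H. unfold aa. dpr; first [exact H | apply L_sq, H | apply L_bb, H | apply L_tri, L_sq, H]. Qed.

Ltac dpr2 := repeat first [ apply L_aa | apply L_bb | apply L_sq | apply L_tri | apply DPR_add | apply DPR_sub | apply DPR_mul | apply DPR_S
   | apply DPR_p0 | apply DPR_p1 | apply DPR_p2 | apply DPR_const ].

Lemma DPR_rr : DPR 2 (fun v => rr (Vector.hd v) (Vector.hd (Vector.tl v))).
Proof.
  apply (DPR_rec 1 (fun v => aa (Vector.hd v)) (fun v : Vector.t nat 3 =>
     2 * Vector.hd (Vector.tl (Vector.tl v)) - bb (Vector.hd v) *
       (1 - (bb (Vector.hd v) - 2 * Vector.hd (Vector.tl (Vector.tl v)))))).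
  dpr2. dpr2.
  intro v. vd v. simpl. induction a0; simpl; auto. rewrite <- IHa0; reflexivity.
Qed.

Lemma DPR_dig : DPR 2 (fun v => dig (Vector.hd v) (Vector.hd (Vector.tl v))).
Proof. unfold dig. dpr2; exact DPR_rr. Qed.

Lemma DPR_hD : DPR 3 hD.
Proof.
  unfold hD, valid. repeat first [ apply (lift2 dig DPR_dig) | apply (lift2 rr DPR_rr) | apply L_aa | apply L_bb | apply DPR_add | apply DPR_sub | apply DPR_mul | apply DPR_S
   | apply DPR_p0 | apply DPR_p1 | apply DPR_p2 | apply DPR_const ]. all: apply (lift2 rr); [exact DPR_rr| apply DPR_p0 | apply DPR_p1].
Qed.
Open Scope nat_scope.

Lemma tri_S s : tri (S s) = tri s + S s.
Proof. reflexivity. Qed.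

Lemma sq_S n : sq (S n) = sq n + (1 - ((S n - (tri (sq n) + S (sq n))) + ((tri (sq n) + S (sq n)) - S n))).
Proof. reflexivity. Qed.

Lemma sq_inv n : tri (sq n) <= n < tri (sq n) + S (sq n).
Proof.
  induction n. simpl. lia.
  rewrite sq_S. destruct (Nat.eq_dec (S n) (tri (sq n) + S (sq n))) as [E|E].
  - replace (1 - _) with 1 by lia. rewrite Nat.add_1_r, tri_S. lia.
  - replace (1 - _) with 0 by lia. rewrite Nat.add_0_r. lia.
Qed.

Lemma unpair_eq n : unpair n = (aa n, bb n).
Proof.
  induction n. reflexivity.
  change (unpair (S n)) with (pair_succ (unpair n)). rewrite IHn.
  unfold aa, bb. pose proof (sq_inv n) as Hi. rewrite sq_S.
  destruct (Nat.eq_dec (S n) (tri (sq n) + S (sq n))) as [E|E].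
  - replace (1 - _) with 1 by lia. rewrite Nat.add_1_r, tri_S.
    replace (sq n - (n - tri (sq n))) with 0 by lia. simpl pair_succ. f_equal; lia.
  - replace (1 - _) with 0 by lia. rewrite Nat.add_0_r.
    destruct (sq n - (n - tri (sq n))) eqn:Ea. lia. simpl pair_succ. f_equal; lia.
Qed.
Open Scope R_scope.

Lemma cvg_crit (t : nat -> R) L (e : nat -> R) :
  (forall N, sum_f_R0 t N = L + e N) -> (forall N, Rabs (e N) <= (/2)^(S N)) ->
  infinite_sum t L.
Proof.
  intros Hs He eps Heps.
  destruct (pow_lt_1_zero (/2)) with (y := eps) as [N0 HN0].
  rewrite Rabs_pos_eq; lra. exact Heps.
  exists N0. intros n Hn. unfold R_dist. rewrite Hs.
  replace (L + e n - L) with (e n) by ring.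
  eapply Rle_lt_trans. apply He. specialize (HN0 (S n) ltac:(lia)).
  rewrite Rabs_pos_eq in HN0. exact HN0. apply pow_le; lra.
Qed.

Section Valid.
Variable n : nat.
Hypothesis Hb : (0 < bb n)%nat.
Hypothesis Hab : (aa n <= bb n)%nat.

Lemma rr_le i : (rr n i <= bb n)%nat.
Proof. induction i; cbn [rr]. exact Hab. destruct (Nat.le_gt_cases (bb n) (2 * rr n i)).
  replace (1 - (bb n - 2 * rr n i))%nat with 1%nat by lia. lia.
  replace (1 - (bb n - 2 * rr n i))%nat with 0%nat by lia. lia. Qed.

Lemma dig_01 i : dig n i = 0%nat \/ dig n i = 1%nat.
Proof. unfold dig. lia. Qed.

Lemma rr_S_R i : INR (rr n (S i)) = 2 * INR (rr n i) - INR (bb n) * INR (dig n i).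
Proof.
  unfold dig. cbn [rr].
  destruct (Nat.le_gt_cases (bb n) (2 * rr n i)) as [H|H].
  - replace (1 - (bb n - 2 * rr n i))%nat with 1%nat by lia.
    rewrite Nat.mul_1_r, minus_INR, mult_INR by lia. simpl. ring.
  - replace (1 - (bb n - 2 * rr n i))%nat with 0%nat by lia.
    rewrite Nat.mul_0_r, Nat.sub_0_r, mult_INR. simpl. ring.
Qed.

Lemma bR : INR (bb n) <> 0.
Proof. apply not_0_INR. lia. Qed.

Lemma sum_dig N : sum_f_R0 (fun i => INR (dig n i) * (/2)^(S i)) N =
  INR (aa n) / INR (bb n) - INR (rr n (S N)) / INR (bb n) * (/2)^(S N).
Proof.
  pose proof bR. induction N.
  - simpl sum_f_R0. rewrite rr_S_R. simpl rr. field. auto.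
  - rewrite tech5, IHN. rewrite (rr_S_R (S N)).
    simpl pow. field. auto.
Qed.

Lemma sum_geo N : sum_f_R0 (fun i => (/2)^(S i)) N = 1 - (/2)^(S N).
Proof. induction N. simpl; field. rewrite tech5, IHN. simpl pow. field. Qed.

Lemma err_bound N : 0 <= INR (rr n (S N)) / INR (bb n) <= 1.
Proof.
  pose proof (rr_le (S N)). assert (0 < INR (bb n)) by (apply lt_0_INR; lia).
  split. unfold Rdiv. apply Rmult_le_pos. apply pos_INR. left; apply Rinv_0_lt_compat; auto.
  apply (Rmult_le_reg_r (INR (bb n))); auto. field_simplify; [|lra].
  apply le_INR; auto.
Qed.

Lemma inf_dig1 : infinite_sum (fun i => INR (dig n i) * (/2)^(S i)) (INR (aa n) / INR (bb n)).
Proof.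
  apply (cvg_crit _ _ (fun N => - (INR (rr n (S N)) / INR (bb n) * (/2)^(S N)))).
  intro N. rewrite sum_dig. ring.
  intro N. pose proof (err_bound N). assert (0 < (/2)^(S N)) by (apply pow_lt; lra).
  rewrite Rabs_Ropp, Rabs_pos_eq by nra. nra.
Qed.

Lemma inf_dig0 : infinite_sum (fun i => (1 - INR (dig n i)) * (/2)^(S i)) (1 - INR (aa n) / INR (bb n)).
Proof.
  apply (cvg_crit _ _ (fun N => (INR (rr n (S N)) / INR (bb n) - 1) * (/2)^(S N))).
  intro N.
  pose proof (minus_sum (fun i => (/2)^(S i)) (fun i => INR (dig n i) * (/2)^(S i)) N) as M.
  replace (sum_f_R0 (fun i => (1 - INR (dig n i)) * (/ 2) ^ S i) N) with
    (sum_f_R0 (fun i => (/2)^(S i) - INR (dig n i) * (/2)^(S i)) N).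
  rewrite M, sum_geo, sum_dig. ring.
  apply sum_eq. intros; ring.
  intro N. pose proof (err_bound N). assert (0 < (/2)^(S N)) by (apply pow_lt; lra).
  rewrite Rabs_left1 by nra. nra.
Qed.
End Valid.
Open Scope R_scope.

Definition Rnd : PF 2 := comp_pf 1 2 rand_pf
  (fun i => det 2 (Vector.nth (Vector.cons _ (fun _ => 0%nat) 0 (Vector.nil _)) i)).
Definition Dpf : PF 2 := mu_pf 2 (det 3 hD).
Definition gs : Fin.t 2 -> PF 1 := fun i =>
  Vector.nth (Vector.cons _ (proj_pf 1 Fin.F1) 1 (Vector.cons _ (mu_pf 1 Rnd) 0 (Vector.nil _))) i.
Definition Top : PF 1 := comp_pf 2 1 Dpf gs.

Lemma PR_Top : PR 1 Top.
Proof.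
  apply PR_comp.
  - apply (PR_mu 2). exact DPR_hD.
  - apply (forall_cons (PR 1)). apply PR_proj. apply forall_cons.
    apply (PR_mu 1). apply PR_comp. exact PR_rand.
    apply (forall_cons (fun h => PR 2 (det 2 h))). apply DPR_const. intro i; apply forall_nil.
    intro i; apply forall_nil.
Qed.

Lemma Rnd_eq x y : Rnd x y = if Nat.eqb y 0 then 1/2 else if Nat.eqb y 1 then 1/2 else 0.
Proof. unfold Rnd. rewrite comp_det. reflexivity. Qed.

Lemma prodlt_const y c : prodlt y (fun _ => c) = c ^ y.
Proof. induction y; simpl. reflexivity. rewrite IHy. ring. Qed.

Lemma muR_eq x Y : mu_pf 1 Rnd x Y = (/2) ^ (S Y).
Proof.
  unfold mu_pf. rewrite Rnd_eq. simpl Nat.eqb.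
  replace (fun z => ssum (fun j => Rnd (snoc1 1 x z) (S j))) with (fun _ : nat => /2).
  rewrite prodlt_const. simpl. field.
  apply functional_extensionality; intro z.
  rewrite (ssum_point _ 0). rewrite Rnd_eq. simpl. field.
  intros j Hj. rewrite Rnd_eq. destruct j. lia. reflexivity.
Qed.

Lemma valid_cases n : (valid n = 1%nat /\ (0 < bb n)%nat /\ (aa n <= bb n)%nat) \/
                      (valid n = 0%nat /\ ~ ((0 < bb n)%nat /\ (aa n <= bb n)%nat)).
Proof.
  unfold valid. destruct (Nat.eq_dec (bb n) 0) as [E|E].
  - right. rewrite E. simpl. lia.
  - destruct (Nat.le_gt_cases (aa n) (bb n)).
    + left. replace (1 - (1 - bb n))%nat with 1%nat by lia.
      replace (1 - (aa n - bb n))%nat with 1%nat by lia. lia.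
    + right. replace (1 - (aa n - bb n))%nat with 0%nat by lia. lia.
Qed.

Lemma Dpf_eq n Y y : Dpf (Vector.cons _ n 1 (Vector.cons _ Y 0 (Vector.nil _))) y =
  if andb (Nat.eqb (valid n) 1) (Nat.eqb y (dig n Y)) then 1 else 0.
Proof.
  unfold Dpf. apply (mu_det_point 2 hD).
  intro z. unfold hD. simpl Vector.hd.
  destruct (valid_cases n) as [[V _]|[V _]]; rewrite V; simpl andb.
  - destruct (Nat.eqb z (dig n Y)) eqn:E.
    + apply Nat.eqb_eq in E. subst. lia.
    + apply Nat.eqb_neq in E. lia.
  - simpl. lia.
Qed.
Open Scope R_scope.

Lemma Top_eq n y : Top (Vector.cons _ n 0 (Vector.nil _)) y =
  ssum (fun Y => (if andb (Nat.eqb (valid n) 1) (Nat.eqb y (dig n Y)) then 1 else 0) * (/2)^(S Y)).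
Proof.
  unfold Top, comp_pf, gs. simpl sumvec. simpl prodfin.
  rewrite (ssum_point _ n).
  - unfold proj_pf. simpl. rewrite Nat.eqb_refl. f_equal.
    apply functional_extensionality; intro Y. rewrite Dpf_eq, muR_eq. simpl pow. ring.
  - intros j Hj. apply ssum_zero'. intro Y. unfold proj_pf. simpl.
    replace (Nat.eqb j n) with false. ring. symmetry; apply Nat.eqb_neq; auto.
Qed.

Lemma ssum_ext a b : (forall j, a j = b j) -> ssum a = ssum b.
Proof. intro H. f_equal. apply functional_extensionality; auto. Qed.

Lemma Top_I2P v y : Top v y = I2P v y.
Proof.
  pattern v; apply Vector.caseS'; clear v; intros n v.
  pattern v; apply Vector.case0; clear v.
  rewrite Top_eq. unfold I2P, onearg. simpl Vector.hd. rewrite unpair_eq.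
  destruct (valid_cases n) as [[V [Hb Hab]]|[V Hn]]; rewrite V; simpl andb.
  - assert (Hlt : Nat.ltb 0 (bb n) = true) by (apply Nat.ltb_lt; auto). rewrite Hlt.
    assert (0 < INR (bb n)) by (apply lt_0_INR; auto).
    assert (0 <= INR (aa n) / INR (bb n)).
    { unfold Rdiv. apply Rmult_le_pos. apply pos_INR. left; apply Rinv_0_lt_compat; auto. }
    assert (INR (aa n) / INR (bb n) <= 1).
    { apply (Rmult_le_reg_r (INR (bb n))); auto. field_simplify; [|lra]. apply le_INR; auto. }
    destruct (Rle_dec 0 _) as [_|C]; [|lra]. destruct (Rle_dec _ 1) as [_|C]; [|lra].
    destruct y as [|[|y]].
    + rewrite (ssum_ext _ (fun i => (1 - INR (dig n i)) * (/2)^(S i))).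
      apply ssum_spec, inf_dig0; auto.
      intro Y. destruct (dig_01 n Hb Hab Y) as [E|E]; rewrite E; simpl; ring.
    + rewrite (ssum_ext _ (fun i => INR (dig n i) * (/2)^(S i))).
      apply ssum_spec, inf_dig1; auto.
      intro Y. destruct (dig_01 n Hb Hab Y) as [E|E]; rewrite E; simpl; ring.
    + apply ssum_zero'. intro Y. destruct (dig_01 n Hb Hab Y) as [E|E]; rewrite E; simpl; ring.
  - rewrite ssum_zero' by (intro; ring).
    destruct (Nat.ltb 0 (bb n)) eqn:Hlt; [|reflexivity].
    apply Nat.ltb_lt in Hlt.
    destruct (Rle_dec 0 _); [|reflexivity]. destruct (Rle_dec _ 1) as [C|]; [|reflexivity].
    exfalso. apply Hn. split; auto.
    assert (0 < INR (bb n)) by (apply lt_0_INR; auto).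
    apply INR_le. apply (Rmult_le_compat_r (INR (bb n))) in C; [|lra].
    field_simplify in C; lra.
Qed.

Theorem mainTheorem9 : PR 1 I2P.
Proof.
  replace I2P with Top. exact PR_Top.
  apply functional_extensionality; intro v; apply functional_extensionality; intro y.
  apply Top_I2P.
Qed.
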